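(* Let $\mathrm{Lab}$ be a labelling system on a finite simplicial tree $T$ with index set $\{1,\dots,N\}$, and let $T_{\mathrm{spl}}$ be the union of the useful edges of $T$. If $T_{\mathrm{spl}}$ is nonempty, then $\bigcup_{v\in T_{\mathrm{spl}}}\mathrm{Lab}(v)=\{1,\dots,N\}$, the union being over vertices $v$ of $T_{\mathrm{spl}}$.
   Context: A labelling system on a finite simplicial tree $T$ assigns to each vertex $v$ a subset $\mathrm{Lab}(v)\subset\{1,\dots,N\}$ such that (A) $\mathrm{Lab}(a)\cap\mathrm{Lab}(b)\subset\mathrm{Lab}(x)$ whenever $x$ is a vertex on the shortest path between vertices $a,b$, and (B) $\bigcup_v\mathrm{Lab}(v)=\{1,\dots,N\}$. Removing the open edge $e$ leaves two closed connected components $T^+(e)$, $T^-(e)$. The edge $e$ is useless if $\bigcup_{v\in T^+(e)}\mathrm{Lab}(v)$ or $\bigcup_{v\in T^-(e)}\mathrm{Lab}(v)$ equals $\{1,\dots,N\}$, and useful otherwise. *)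

(* Defs.v *)
From mathcomp Require Import all_boot.
Set Implicit Arguments. Unset Strict Implicit. Unset Printing Implicit Defensive.

Definition is_tree (V : finType) (e : rel V) : Prop :=
  [/\ symmetric e, irreflexive e &
      forall a b : V, exists! p : seq V,
        [&& path e a p, last a p == b & uniq (a :: p)]].

(* Labelling system with index set 'I_N (standing for {1,...,N}).
   (A): for the (unique, hence shortest) simple path a :: p from a to b and
        any vertex x on it, Lab a :&: Lab b \subset Lab x.
   (B): the labels cover everything. *)
Definition labelling_system (N : nat) (V : finType) (e : rel V)
    (Lab : V -> {set 'I_N}) : Prop :=
  (forall (a b x : V) (p : seq V),
      path e a p -> last a p = b -> uniq (a :: p) -> x \in a :: p ->
      Lab a :&: Lab b \subset Lab x)
  /\ \bigcup_(v : V) Lab v = [set: 'I_N].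

Definition rel_minus_edge (V : finType) (e : rel V) (u v : V) : rel V :=
  fun x y => e x y && ~~ (((x == u) && (y == v)) || ((x == v) && (y == u))).

Definition side (V : finType) (e : rel V) (u v : V) : {set V} :=
  [set w | connect (rel_minus_edge e u v) u w].

Definition useful (N : nat) (V : finType) (e : rel V) (Lab : V -> {set 'I_N})
    (u v : V) : bool :=
  [&& e u v,
      \bigcup_(w in side e u v) Lab w != [set: 'I_N] &
      \bigcup_(w in side e v u) Lab w != [set: 'I_N]].

Definition Tspl (N : nat) (V : finType) (e : rel V) (Lab : V -> {set 'I_N}) :
    {set V} :=
  [set v | [exists u, useful e Lab u v || useful e Lab v u]].

(* Main.v *)
Require Import Defs.
From mathcomp Require Import all_boot.
Set Implicit Arguments. Unset Strict Implicit.

Lemma R_sub (V : finType) (e : rel V) a b : subrel (rel_minus_edge e a b) e.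
Proof. by move=> x y /andP[]. Qed.

Lemma R_sym (V : finType) (e : rel V) a b : symmetric e -> symmetric (rel_minus_edge e a b).
Proof.
move=> se x y; rewrite /rel_minus_edge se; congr (_ && ~~ _).
by rewrite orbC (andbC (y == a)) (andbC (y == b)).
Qed.

Lemma avoid_path (V : finType) (e : rel V) a b c x p :
  (c == a) || (c == b) -> path e x p -> c \notin x :: p ->
  path (rel_minus_edge e a b) x p.
Proof.
move=> hc; elim: p x => [//|y p IH] x /= /andP[exy pp].
rewrite !inE !negb_or => /and3P[cx cy cp].
rewrite IH ?pp ?inE ?negb_or ?cy ?cp // andbT /rel_minus_edge exy /=.
by case/orP: hc => /eqP <-; rewrite !(eq_sym x) !(eq_sym y) (negbTE cx) (negbTE cy) ?andbF.
Qed.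

Lemma sep (V : finType) (e : rel V) a b :
  is_tree e -> e a b -> ~~ connect (rel_minus_edge e a b) a b.
Proof.
case=> se ie ut eab; apply/negP => /connectP[p pp lp].
case/shortenP: pp lp => p' pp' up' _ lp.
have [q [_ Hq]] := ut a b.
have H1 := Hq p'; have H2 := Hq [:: b].
have Hab : a != b by apply: contraTneq eab => ->; rewrite ie.
have E1 := H1 _; rewrite (sub_path (@R_sub _ e a b) pp') -lp eqxx up' in E1.
have E2 := H2 _; rewrite /= eab eqxx /= inE Hab in E2.
have E : p' = [:: b] by rewrite -E1 // -E2.
by move: pp'; rewrite E /= /rel_minus_edge eab !eqxx.
Qed.

Lemma first_split (T : eqType) (P : pred T) x q : P (last x q) ->
  P x \/ exists p1 z p2, [/\ q = p1 ++ z :: p2, P z & ~~ P (last x p1)].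
Proof.
elim: q x => [|y q IH] x /=; first by left.
move=> /IH [Py|[p1 [z [p2 [-> Pz Pl]]]]]; case Px: (P x); auto.
- by right; exists [::], y, q; rewrite Px.
- by right; exists (y :: p1), z, p2.
Qed.

Lemma useful_sym N (V : finType) (e : rel V) (Lab : V -> {set 'I_N}) u v :
  symmetric e -> useful e Lab u v -> useful e Lab v u.
Proof. by move=> se /and3P[a b c]; rewrite /useful se a b c. Qed.

Lemma wlog_path N (V : finType) (e : rel V) (Lab : V -> {set 'I_N}) u v q w :
  is_tree e -> useful e Lab u v -> path e u q -> last u q = w -> uniq (u :: q) ->
  exists s t q', [/\ useful e Lab s t, path e s q', last s q' = w,
     uniq (s :: q') & t \notin s :: q'].
Proof.
case=> se ie _ huv pq lq uq.
have Huv : u != v.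
  by apply: contraTneq (huv) => ->; rewrite /useful ie.
move: pq lq uq; case Hv: (v \in u :: q).
  move: Hv; rewrite inE eq_sym (negbTE Huv) /= => /splitPr [q1 q2].
  rewrite cat_path last_cat /= => /andP[_ /andP[_ pq2]] lq.
  rewrite cat_uniq mem_cat negb_or => /andP[/andP[_ hu] /and3P[_ _ uq2]].
  exists v, u, q2; split => //; first exact: useful_sym.
by move=> pq lq uq; exists u, v, q; rewrite Hv.
Qed.

Lemma core N (V : finType) (e : rel V) (Lab : V -> {set 'I_N}) s t p1 z p2 i :
  is_tree e -> labelling_system e Lab -> useful e Lab s t ->
  path e s (p1 ++ z :: p2) -> uniq (s :: p1 ++ z :: p2) ->
  t \notin s :: p1 ++ z :: p2 -> i \in Lab z -> i \notin Lab (last s p1) ->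
  useful e Lab (last s p1) z.
Proof.
move=> ht [LA LB] hst pp up tn iz iy.
have [se ie ut] := ht.
set y := last s p1 in iy *.
move: (pp); rewrite cat_path => /andP[pp1 /= /andP[eyz _]].
have zn : z \notin s :: p1.
  by move: up; rewrite -cat_cons cat_uniq => /and3P[_ /= /norP[] //].
rewrite /useful eyz /=; apply/andP; split.
  apply/negP => /eqP E; have : i \in [set: 'I_N] by [].
  rewrite -E => /bigcupP [x]; rewrite inE => /connectP [r pr lr] ix.
  case/shortenP: pr lr => r' pr' ur' _ lr.
  case Hz: (z \in y :: r').
    by move: (sep ht eyz); rewrite (path_connect pr' Hz).
  have := LA z x y (y :: r'); rewrite /= se eyz (sub_path (@R_sub _ e y z) pr') lr.
  move: ur' => /= /andP[ur1 ur2]; rewrite Hz ur1 ur2 !inE eqxx orbT.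
  move=> /(_ isT erefl isT isT) /subsetP H.
  have Hi : i \in Lab z :&: Lab (last y r') by rewrite inE iz -lr ix.
  by move: (H _ Hi); rewrite (negbTE iy).
have Hs : \bigcup_(w in side e z y) Lab w \subset \bigcup_(w in side e s t) Lab w.
  apply/bigcupsP => x hx; apply: (bigcup_sup x); rewrite inE.
  move: hx; rewrite inE => /connectP [r pr ->].
  case Hs: (s \in z :: r).
    have c1 := path_connect pr Hs.
    have hc : (z == z) || (z == y) by rewrite eqxx.
    have pp1' := avoid_path hc pp1 zn.
    have c2 : connect (rel_minus_edge e z y) s y by apply/connectP; exists p1.
    have := sep ht (eyz : e y z).
    suff -> : connect (rel_minus_edge e y z) y z by [].
    have Req : rel_minus_edge e y z =2 rel_minus_edge e z y.
      by move=> a b; rewrite /rel_minus_edge orbC.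
    rewrite (eq_connect Req) (sym_connect_sym (R_sym z y se)).
    exact: (connect_trans c1 c2).
  have c1 : connect (rel_minus_edge e s t) z (last z r).
    apply/connectP; exists r => //.
    have hc : (s == s) || (s == t) by rewrite eqxx.
    apply: (avoid_path hc) (sub_path (@R_sub _ e z y) pr) _; by rewrite Hs.
  apply: connect_trans c1.
  have hc : (t == s) || (t == t) by rewrite eqxx orbT.
  have pp' := avoid_path hc pp tn.
  by apply: (path_connect pp'); rewrite inE mem_cat inE eqxx !orbT.
move: hst => /and3P[_ H _]; apply: contra H => /eqP E.
rewrite E in Hs; rewrite eqEsubset subsetT /=; exact: Hs.
Qed.

Lemma useful_in N (V : finType) (e : rel V) (Lab : V -> {set 'I_N}) u v :
  useful e Lab u v -> v \in Tspl e Lab.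
Proof. by move=> h; rewrite inE; apply/existsP; exists u; rewrite h. Qed.

Theorem mainTheorem12 (N : nat) (V : finType) (e : rel V)
    (Lab : V -> {set 'I_N}) :
  is_tree e -> labelling_system e Lab ->
  Tspl e Lab != set0 ->
  \bigcup_(v in Tspl e Lab) Lab v = [set: 'I_N].
Proof.
move=> ht hl /set0Pn [v0]; rewrite inE => /existsP [u0].
have [se ie ut] := ht.
have [LA LB] := hl.
move=> H0.
have [u [v huv]] : exists u v, useful e Lab u v.
  by case/orP: H0 => h; [exists u0, v0 | exists v0, u0].
apply/setP => i; rewrite inE; apply/bigcupP.
have : i \in [set: 'I_N] by [].
rewrite -LB => /bigcupP [w _ iw].
have [q [/and3P [pq /eqP lq uq] _]] := ut u w.
have [s [t [q' [hst pq' lq' uq' tn]]]] := wlog_path ht huv pq lq uq.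
have : i \in Lab (last s q') by rewrite lq'.
move=> /(@first_split _ (fun x => i \in Lab x)) [is0|[p1 [z [p2 [Eq iz iy]]]]].
  exists s => //; apply: (@useful_in _ _ _ _ t); exact: useful_sym.
exists z => //; apply: (@useful_in _ _ _ _ (last s p1)).
by rewrite Eq in pq' uq' tn; apply: (core ht hl hst pq' uq' tn iz iy).
Qed.
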